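(* (1) If $\upsilon,\upsilon'$ are union gadgets such that the output signature of $\upsilon$ equals the input signature of $\upsilon'$, then there is a union gadget $\mu$ with $\mu(\mathbf A)\cong\upsilon'(\upsilon(\mathbf A))$ for all structures $\mathbf A$ (of the input signature of $\upsilon$). (2) If $\phi,\phi'$ are Datalog interpretations such that the output signature of $\phi$ equals the input signature of $\phi'$, then there is a Datalog interpretation $\psi$ with $\psi(\mathbf A)\cong\phi'(\phi(\mathbf A))$ for all structures $\mathbf A$. (3) If $\upsilon$ is a union gadget and $\phi$ a Datalog interpretation such that the output signature of $\upsilon$ equals the input signature of $\phi$, then there exist a union gadget $\upsilon'$ and a Datalog interpretation $\phi'$ with $\upsilon'(\phi'(\mathbf A))\cong\phi(\upsilon(\mathbf A))$ for all structures $\mathbf A$.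
   Context: Structures. A (multisorted relational) signature consists of a set of types and a set of relation symbols; each symbol $R$ has an arity $\mathrm{ar}_R=(\mathrm{ar}_R(1),\dots,\mathrm{ar}_R(k))$, a tuple of types. A structure $\mathbf A$ of this signature consists of a set $A_t$ for each type $t$ and a relation $R^{\mathbf A}\subseteq A_{\mathrm{ar}_R(1)}\times\dots\times A_{\mathrm{ar}_R(k)}$ for each symbol $R$; elements of different types are considered distinct. Isomorphism $\cong$ is the usual type-preserving isomorphism of structures. Datalog programs. Variables carry types. An atomic $\Delta$-formula is either $R(x_1,\dots,x_n)$ with $R$ a $\Delta$-symbol and $x_i$ of type $\mathrm{ar}_R(i)$, or an equality $x=y$ of same-typed variables. A Datalog program with input signature $\Pi$ consists of a signature $\Delta\supseteq\Pi$ with the same types, a finite set of rules $t_0\leftarrow t_1,\dots,t_r$ ($t_i$ atomic $\Delta$-formulas; the head $t_0$ uses neither a $\Pi$-symbol nor equality), and a designated output symbol, evaluated by least-fixed-point semantics on a $\Pi$-structure; the output is the final interpretation of the output symbol. Its width is the maximum number of variables in a rule. Datalog interpretations. A Datalog interpretation $\phi$ mapping $\Pi$-structures to $\Sigma$-structures consists of a Datalog program $\phi_t$ with input signature $\Pi$ for each $\Sigma$-type $t$, and a Datalog program $\phi_R$ for each $\Sigma$-symbol $R$ of arity $k$, such that the arity of $\phi_R$ is the concatenation of the arities of $\phi_{\mathrm{ar}_R(1)},\dots,\phi_{\mathrm{ar}_R(k)}$. Its output $\phi(\mathbf A)$ has $t$-th domain $\phi_t(\mathbf A)$ (a set of tuples),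 and $(w_1,\dots,w_k)\in R^{\phi(\mathbf A)}$ iff the concatenation of $w_1,\dots,w_k$ lies in $\phi_R(\mathbf A)$. Union gadgets. For signatures $\Pi,\Sigma$, a union gadget $\upsilon=(d,r)$ consists of a map $d$ from $\Pi$-types to $\Sigma$-types and a map $r$ from $\Pi$-symbols to $\Sigma$-symbols with $\mathrm{ar}_{r(R)}=d\circ\mathrm{ar}_R$ for every $\Pi$-symbol $R$. Applied to a $\Pi$-structure $\mathbf A$ (with domains made pairwise disjoint, e.g. by tagging each element with its type), it yields the $\Sigma$-structure $\upsilon(\mathbf A)$ whose $t$-th domain is $\bigcup_{s:\,d(s)=t}A_s$ and with $S^{\upsilon(\mathbf A)}=\bigcup_{R:\,r(R)=S}R^{\mathbf A}$. *)

(* Defs.v *)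
From mathcomp Require Import all_boot.
From Stdlib Require List.

Set Implicit Arguments.
Unset Strict Implicit.
Unset Printing Implicit Defensive.

Record signature := Signature {
  sty  : finType;
  ssym : finType;
  sar  : ssym -> seq sty
}.

(** All elements live in one carrier, each element carrying its type
    ([tp]); so elements of different types are distinct, and the t-th
    domain is [{x | tp x = t}]. *)
Record structure (S : signature) := Structure {
  car :> Type;
  tp  : car -> sty S;
  rel : ssym S -> seq car -> Prop;
  rel_typed : forall R xs, rel R xs -> map tp xs = sar R
}.
Arguments tp {S} s _.
Arguments rel {S} s _ _.

Definition iso (S : signature) (A B : structure S) : Prop :=
  exists (f : A -> B) (g : B -> A),
    cancel f g /\ cancel g f /\
    (forall x, tp B (f x) = tp A x) /\
    (forall R xs, rel A R xs <-> rel B R (map f xs)).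

Record gadget (P S : signature) := Gadget {
  gd : sty P -> sty S;
  gr : ssym P -> ssym S;
  gar : forall R, sar (gr R) = map gd (sar R)
}.

Section ApplyGadget.
Variables (P S : signature) (u : gadget P S) (A : structure P).

Definition gadget_rel (R' : ssym S) (xs : seq A) : Prop :=
  exists R, gr u R = R' /\ rel A R xs.

Lemma gadget_rel_typed R' xs :
  gadget_rel R' xs -> map (fun x => gd u (tp A x)) xs = sar R'.
Proof.
move=> [R [<- HR]]; rewrite gar -(rel_typed HR) -map_comp; done.
Qed.

(** υ(A): the t-th domain is the union of the A_s with d(s) = t
    (the A_s being already disjoint), and S^{υ(A)} is the union of the
    R^A with r(R) = S. *)
Definition apply_gadget : structure S :=
  @Structure S A (fun x => gd u (tp A x)) gadget_rel gadget_rel_typed.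
End ApplyGadget.

Inductive atom (D : Type) (n : nat) :=
  | ARel of D & seq 'I_n
  | AEq of 'I_n & 'I_n.

Record rule (D X T : Type) := Rule {
  rn    : nat;
  rvty  : 'I_rn -> T;
  rhead : X * seq 'I_rn;
  rbody : seq (atom D rn)
}.
Arguments rn {D X T} r.
Arguments rvty {D X T} r i.
Arguments rhead {D X T} r.
Arguments rbody {D X T} r.

(** A Datalog program with input signature [P]: the signature Δ ⊇ P has
    the same types as P and symbols [ssym P + aux] (the auxiliary,
    intensional symbols [aux] with arities [aux_ar]). *)
Record program (P : signature) := Program {
  aux    : finType;
  aux_ar : aux -> seq (sty P);
  rules  : seq (rule (ssym P + aux) aux (sty P));
  out    : ssym P + aux;
  rules_wt : forall ru, List.In ru rules ->
      map (rvty ru) (rhead ru).2 = aux_ar (rhead ru).1 /\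
      (forall a, List.In a (rbody ru) ->
         match a with
         | ARel D xs => map (rvty ru) xs =
                          match D with inl R => sar R | inr x => aux_ar x end
         | AEq x y => rvty ru x = rvty ru y
         end)
}.

Definition dar (P : signature) (p : program P) (D : ssym P + aux p) : seq (sty P) :=
  match D with inl R => sar R | inr x => aux_ar x end.

Definition prog_ar (P : signature) (p : program P) : seq (sty P) := dar (out p).

Section DatalogSemantics.
Variables (P : signature) (A : structure P) (p : program P).

Definition dholds (I : aux p -> seq A -> Prop) (D : ssym P + aux p) (xs : seq A) : Prop :=
  match D with inl R => rel A R xs | inr x => I x xs end.

Definition atom_holds (I : aux p -> seq A -> Prop) n (v : 'I_n -> A)
    (a : atom (ssym P + aux p) n) : Prop :=
  match a with
  | ARel D xs => dholds I D (map v xs)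
  | AEq x y => v x = v y
  end.

Definition rules_closed (I : aux p -> seq A -> Prop) : Prop :=
  forall ru, List.In ru (rules p) ->
  forall v : 'I_(rn ru) -> A,
    (forall i, tp A (v i) = rvty ru i) ->
    (forall a, List.In a (rbody ru) -> atom_holds I v a) ->
    I (rhead ru).1 (map v (rhead ru).2).

Definition lfp (x : aux p) (xs : seq A) : Prop :=
  forall I, rules_closed I -> I x xs.

Definition prog_out (xs : seq A) : Prop := dholds lfp (out p) xs.
End DatalogSemantics.
Arguments dholds {P} A p I D xs.
Arguments atom_holds {P} A p I {n} v a.
Arguments rules_closed {P} A p I.
Arguments lfp {P} A p x xs.
Arguments prog_out {P} A p xs.

Record dinterp (P S : signature) := DInterp {
  dom_prog : sty S -> program P;
  rel_prog : ssym S -> program P;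
  dinterp_ar : forall R,
    prog_ar (rel_prog R) = flatten (map (fun t => prog_ar (dom_prog t)) (sar R))
}.

Section ApplyDinterp.
Variables (P S : signature) (phi : dinterp P S) (A : structure P).

Definition delem : Type :=
  { tw : sty S * seq A | prog_out A (dom_prog phi tw.1) tw.2 }.

Definition delem_tp (e : delem) : sty S := (sval e).1.

Definition delem_rel (R : ssym S) (es : seq delem) : Prop :=
  map delem_tp es = sar R /\
  prog_out A (rel_prog phi R) (flatten (map (fun e => (sval e).2) es)).

Lemma delem_rel_typed R es : delem_rel R es -> map delem_tp es = sar R.
Proof. by case. Qed.

Definition apply_dinterp : structure S :=
  @Structure S delem delem_tp delem_rel delem_rel_typed.
End ApplyDinterp.

(* Main.v *)
Require Import Defs.
From mathcomp Require Import all_boot zify.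
Require Import Defs.
From Stdlib Require Import ProofIrrelevance ClassicalEpsilon.
From Stdlib Require List.
Set Implicit Arguments. Unset Strict Implicit. Unset Printing Implicit Defensive.

Lemma In_cat (X : Type) (x : X) (s t : seq X) :
  List.In x (s ++ t) <-> List.In x s \/ List.In x t.
Proof. elim: s => [|a s IH] /=; [tauto|rewrite IH; tauto]. Qed.

Lemma In_map (X Y : Type) (f : X -> Y) y (s : seq X) :
  List.In y (map f s) <-> exists x, List.In x s /\ f x = y.
Proof.
elim: s => [|a s IH] /=; first by split=> // -[x []].
rewrite IH; split.
- by case=> [<-|[x [H <-]]]; [exists a; auto | exists x; auto].
- by case=> x [[<-|H] <-]; [left | right; exists x].
Qed.

Lemma In_flatten (X : Type) (x : X) (ss : seq (seq X)) :
  List.In x (flatten ss) <-> exists s, List.In s ss /\ List.In x s.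
Proof.
elim: ss => [|s ss IH] /=; first by split=> // -[s []].
rewrite In_cat IH; split.
- by case=> [H|[t [H1 H2]]]; [exists s; auto | exists t; auto].
- by case=> t [[<-|H1] H2]; [left | right; exists t].
Qed.

Lemma mem_In (X : eqType) (x : X) s : x \in s -> List.In x s.
Proof. elim: s => [|a s IH] //=; rewrite inE => /orP [/eqP ->|/IH]; auto. Qed.

Lemma In_enum (T : finType) (x : T) : List.In x (enum T).
Proof. apply: mem_In; exact: mem_enum. Qed.

Lemma seq_val (X : Type) n (w : seq X) :
  size w = n -> exists v : 'I_n -> X, map v (enum 'I_n) = w.
Proof.
case: w => [|a w] Hs.
- subst n. have v : 'I_0 -> X by case=> m; rewrite ltn0.
  exists v. by case: (enum 'I_0) (size_enum_ord 0) => [|x s].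
- exists (fun i => nth a (a :: w) i).
  rewrite (@eq_map _ _ _ (nth a (a :: w) \o val)) // map_comp val_enum_ord -Hs.
  exact: (mkseq_nth a (a :: w)).
Qed.

Section Lfp.
Variables (P : signature) (A : structure P) (p : program P).
Lemma lfp_least I : rules_closed A p I -> forall x xs, lfp A p x xs -> I x xs.
Proof. by move=> HI x xs H; apply: H. Qed.
Lemma lfp_closed : rules_closed A p (lfp A p).
Proof.
move=> ru Hru v Hv Hb I HI; apply: (HI ru Hru v Hv) => a Ha.
have := Hb a Ha; case: a Ha => [D xs|x y] //= _; case: D => //= x H; exact: H I HI.
Qed.
Lemma lfp_typed x xs : lfp A p x xs -> map (tp A) xs = aux_ar x.
Proof.
apply: (@lfp_least (fun x xs => map (tp A) xs = aux_ar x)).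
move=> ru Hru v Hv _; rewrite -map_comp (@eq_map _ _ _ (rvty ru) Hv).
exact: (rules_wt Hru).1.
Qed.
Lemma prog_out_typed xs : prog_out A p xs -> map (tp A) xs = prog_ar p.
Proof.
rewrite /prog_out /prog_ar; case: (out p) => [R|x] /=; [exact: rel_typed | exact: lfp_typed].
Qed.
End Lfp.

Definition gcomp (P S T : signature) (u : gadget P S) (u' : gadget S T) : gadget P T.
refine (@Gadget P T (fun s => gd u' (gd u s)) (fun R => gr u' (gr u R)) _).
by move=> R; rewrite !gar -map_comp.
Defined.

Lemma part1 : forall (P S T : signature) (u : gadget P S) (u' : gadget S T),
     exists mu : gadget P T,
       forall A : structure P,
         iso (apply_gadget mu A) (apply_gadget u' (apply_gadget u A)).
Proof.
move=> P S T u u'; exists (gcomp u u') => A.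
exists id, id; do 3 split => //.
move=> R xs; rewrite map_id; split.
- by case=> R0 [<- H]; exists (gr u R0); split => //; exists R0.
- by case=> R1 [<- [R0 [<- H]]]; exists R0.
Qed.

Lemma sig_eq (X : Type) (Q : X -> Prop) (a b : {x | Q x}) : sval a = sval b -> a = b.
Proof. case: a b => [x px] [y py] /= E; subst y; f_equal; exact: proof_irrelevance. Qed.

Definition out_rule (D X T : Type) (cs : seq T) (h : X) (b : D) : rule D X T :=
  @Rule D X T (size cs) (tnth (in_tuple cs)) (h, enum 'I_(size cs))
        [:: ARel b (enum 'I_(size cs))].

Lemma out_rule_ty (T : Type) (cs : seq T) :
  map (tnth (in_tuple cs)) (enum 'I_(size cs)) = cs.
Proof. exact: (map_tnth_enum (in_tuple cs)). Qed.

Lemma fire_out (P : signature) (A : structure P) (q : program P) cs h b w :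
  List.In (out_rule cs h b) (rules q) -> map (tp A) w = cs ->
  dholds A q (lfp A q) b w -> lfp A q h w.
Proof.
move=> Hin Hty Hb.
have Hs : size w = size cs by rewrite -Hty size_map.
have [v Hv] := seq_val Hs.
have := @lfp_closed P A q _ Hin v; rewrite /= Hv; apply.
- move=> i.
  have H : map (tp A \o v) (enum 'I_(size cs)) = map (tnth (in_tuple cs)) (enum 'I_(size cs)).
    by rewrite map_comp Hv Hty out_rule_ty.
  move/eq_in_map: H => H; exact: H i (mem_enum _ i).
- by move=> a [<-|//] /=; rewrite Hv.
Qed.

Lemma enum_pt (n : nat) (Y : Type) (f g : 'I_n -> Y) :
  map f (enum 'I_n) = map g (enum 'I_n) -> forall i, f i = g i.
Proof. by move/eq_in_map => H i; exact: H i (mem_enum _ i). Qed.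

Lemma pmap_nth_none (X : Type) (s : seq X) k m : (size s <= m)%N ->
  pmap id [seq nth None (map Some s) i | i <- iota m k] = [::].
Proof.
elim: k m => [|k IH] m Hm //=; rewrite nth_default ?size_map //=; exact: IH (leqW Hm).
Qed.

Lemma In_filter (X : Type) (a : pred X) x s : List.In x (filter a s) -> a x.
Proof. elim: s => [|y s IH] //=; case: ifP => Ha //= [<-|]; auto. Qed.

Lemma In_all (X : Type) (a : pred X) x s : all a s -> List.In x s -> a x.
Proof. elim: s => [|y s IH] //= /andP [H1 H2] [<-|]; auto. Qed.

Lemma In_all_intro (X : Type) (a : pred X) s : (forall x, List.In x s -> a x) -> all a s.
Proof. elim: s => [|y s IH] //= H; rewrite H /=; auto. Qed.
Lemma In_filter_intro (X : Type) (a : pred X) x s : a x -> List.In x s -> List.In x (filter a s).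
Proof. elim: s => [|y s IH] //= Hx [Hy|H]; first by subst; rewrite Hx; left.
by case: ifP => _; [right|]; auto. Qed.

Section Split.
Variables (P S : signature) (u : gadget P S) (p : program S) (cs : seq (sty P)).

Definition NB := (\max_(x : aux p) size (aux_ar x) + \max_(R : ssym S) size (sar R)
   + \max_(R : ssym P) size (sar R) + size cs)%N.
Local Notation Key := {ffun 'I_NB -> option (sty P)}.
Definition key (s : seq (sty P)) : Key := [ffun i : 'I_NB => nth None (map Some s) (val i)].
Definition decode (k : Key) : seq (sty P) := pmap id [seq k i | i <- enum 'I_NB].

Lemma decodeK s : (size s <= NB)%N -> decode (key s) = s.
Proof.
move=> Hs; rewrite /decode /key.
rewrite (@eq_map _ _ _ (nth None (map Some s) \o val)); last by move=> i; rewrite ffunE.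
rewrite map_comp val_enum_ord -(subnKC Hs) iotaD map_cat add0n pmap_cat.
have -> : [seq nth None [seq Some i | i <- s] i | i <- iota 0 (size s)] = map Some s.
  by rewrite -{1}(size_map Some s); exact: mkseq_nth.
rewrite pmap_nth_none //.
by elim: s {Hs} => [|a s IH] //=; rewrite IH.
Qed.

Definition SA : finType := ((aux p * Key) + (ssym S * Key) + unit)%type.

Definition sa_ar (a : SA) : seq (sty P) :=
  match a with
  | inl (inl (_, k)) => decode k
  | inl (inr (_, k)) => decode k
  | inr _ => cs
  end.

Definition ssym_of (D : ssym S + aux p) (k : Key) : ssym P + SA :=
  match D with
  | inl R => inr (inl (inr (R, k)))
  | inr x => inr (inl (inl (x, k)))
  end.

Definition split_atom n (c : 'I_n -> sty P) (a : atom (ssym S + aux p) n) :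
    atom (ssym P + SA) n :=
  match a with
  | ARel D xs => ARel (ssym_of D (key (map c xs))) xs
  | AEq x y => AEq _ x y
  end.

Definition split_rule (ru : rule (ssym S + aux p) (aux p) (sty S))
    (c : {ffun 'I_(rn ru) -> sty P}) : rule (ssym P + SA) SA (sty P) :=
  @Rule _ _ _ (rn ru) c
    (inl (inl ((rhead ru).1, key (map c (rhead ru).2))), (rhead ru).2)
    (map (split_atom c) (rbody ru)).

Definition ok_choice (ru : rule (ssym S + aux p) (aux p) (sty S))
    (c : {ffun 'I_(rn ru) -> sty P}) : bool :=
  [forall i, gd u (c i) == rvty ru i] &&
  all (fun a => if a is AEq x y then c x == c y else true) (rbody ru).

Definition in_rule (R0 : ssym P) : rule (ssym P + SA) SA (sty P) :=
  out_rule (sar R0) (inl (inr (gr u R0, key (sar R0)))) (inl R0).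

Definition oo_rule : rule (ssym P + SA) SA (sty P) :=
  out_rule cs (inr tt) (ssym_of (out p) (key cs)).

Definition split_rules : seq (rule (ssym P + SA) SA (sty P)) :=
  flatten (map (fun ru => map (@split_rule ru) (filter (@ok_choice ru)
                 (enum {ffun 'I_(rn ru) -> sty P}))) (rules p))
  ++ map in_rule (enum (ssym P)) ++ [:: oo_rule].

Lemma In_split_rules ru' : List.In ru' split_rules ->
  (exists ru c, [/\ List.In ru (rules p), @ok_choice ru c & ru' = @split_rule ru c])
  \/ (exists R0, ru' = in_rule R0) \/ ru' = oo_rule.
Proof.
rewrite /split_rules !In_cat In_flatten In_map /=.
case=> [[s [/In_map [ru [Hru <-]] /In_map [c [Hc <-]]]]|[[R0 [_ <-]]|[<-|//]]].
- left; exists ru, c; split => //.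
  exact: In_filter Hc.
- by right; left; exists R0.
- by right; right.
Qed.

Lemma bnd_dar (D : ssym S + aux p) : (size (dar D) <= NB)%N.
Proof.
rewrite /NB; case: D => [R|x] /=.
- have := @leq_bigmax _ (fun R : ssym S => size (sar R)) R; lia.
- have := @leq_bigmax _ (fun x : aux p => size (aux_ar x)) x; lia.
Qed.
Lemma bnd_P (R0 : ssym P) : (size (sar R0) <= NB)%N.
Proof. rewrite /NB; have := @leq_bigmax _ (fun R : ssym P => size (sar R)) R0; lia. Qed.
Lemma bnd_cs : (size cs <= NB)%N.
Proof. rewrite /NB; lia. Qed.

Lemma out_rule_wt (D X T : Type) (cs' : seq T) (h : X) (b : D) :
  map (rvty (out_rule cs' h b)) (rhead (out_rule cs' h b)).2 = cs'.
Proof. exact: out_rule_ty. Qed.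

Lemma split_wt : forall ru, List.In ru split_rules ->
      map (rvty ru) (rhead ru).2 = sa_ar (rhead ru).1 /\
      (forall a, List.In a (rbody ru) ->
         match a with
         | ARel D xs => map (rvty ru) xs =
                          match D with inl R => sar R | inr x => sa_ar x end
         | AEq x y => rvty ru x = rvty ru y
         end).
Proof.
move=> ru' /In_split_rules [[ru [c [Hru Hc ->]]]|[[R0 ->]|->]].
- have [Hh Hb] := rules_wt Hru.
  move/andP: Hc => [_ Hc]; split.
  + rewrite /= decodeK // size_map.
    by have := bnd_dar (inr (rhead ru).1); rewrite /= -Hh size_map.
  + move=> a' /In_map [a [Ha <-]]; have := Hb a Ha; have := In_all Hc Ha.
    case: a Ha => [D xs|x y] _ /= => [_ H|/eqP //].
    have Hs : (size xs <= NB)%N by have := bnd_dar D; rewrite /dar -H size_map.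
    by case: D H => [R|x] _ /=; rewrite decodeK // size_map.
- split; first by rewrite out_rule_wt /= decodeK // bnd_P.
  by move=> a [<-|//] /=; rewrite out_rule_ty.
- split; first by rewrite out_rule_wt.
  move=> a [<-|//] /=; rewrite out_rule_ty.
  by case: (out p) => [R|x] /=; rewrite decodeK // bnd_cs.
Qed.

Definition split_prog : program P :=
  @Program P SA sa_ar split_rules (inr (inr tt)) split_wt.

Variable A : structure P.
Local Notation B := (apply_gadget u A).

Definition cand (a : SA) (w : seq A) : Prop :=
  match a with
  | inl (inl (x, k)) => lfp B p x w /\ map (tp A) w = decode k
  | inl (inr (R, k)) => rel B R w /\ map (tp A) w = decode k
  | inr _ => prog_out B p w /\ map (tp A) w = cs
  end.

Lemma cand_sym D k w : dholds A split_prog cand (ssym_of D k) w <->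
  dholds B p (lfp B p) D w /\ map (tp A) w = decode k.
Proof. by case: D. Qed.

Lemma cand_closed : rules_closed A split_prog cand.
Proof.
move=> ru' /In_split_rules [[ru [c [Hru Hc ->]]]|[[R0 ->]|->]] v Hv Hb.
- have [Hh Hbw] := rules_wt Hru.
  move/andP: (Hc) => [/forallP Hc1 _]; split.
  + apply: (@lfp_closed S B p ru Hru v).
    * by move=> i /=; rewrite Hv; apply/eqP; exact: Hc1.
    * move=> a Ha; have := Hb (split_atom c a) (proj2 (In_map _ _ _) (ex_intro _ a (conj Ha erefl))).
      by case: a Ha => [D xs|x y] _ //= /cand_sym [].
  + rewrite /= decodeK; first by elim: (rhead ru).2 => //= a l ->; rewrite Hv.
    by have := bnd_dar (inr (rhead ru).1); rewrite /= -Hh !size_map.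
- have := Hb _ (or_introl erefl) => /= H; split.
  + by exists R0.
  + by rewrite decodeK ?bnd_P // (rel_typed H).
- have := Hb _ (or_introl erefl) => /= /cand_sym [H1 H2]; split => //.
  by rewrite H2 decodeK // bnd_cs.
Qed.

Lemma split_sub a w : lfp A split_prog a w -> cand a w.
Proof. exact: lfp_least cand_closed a w. Qed.

Lemma in_lfp R0 w : rel A R0 w ->
  lfp A split_prog (inl (inr (gr u R0, key (map (tp A) w)))) w.
Proof.
move=> H; rewrite (rel_typed H).
apply: (@fire_out P A split_prog (sar R0) _ (inl R0)) => //; last exact: rel_typed H.
rewrite /= /split_rules !In_cat; right; left.
by apply/In_map; exists R0; split => //; exact: In_enum.
Qed.

Lemma in_lfp' R w : rel B R w ->
  lfp A split_prog (inl (inr (R, key (map (tp A) w)))) w.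
Proof. by case=> R0 [<- H]; exact: in_lfp. Qed.

Lemma sup_lfp x w : lfp B p x w ->
  lfp A split_prog (inl (inl (x, key (map (tp A) w)))) w.
Proof.
move: x w; apply: (@lfp_least S B p (fun x w => lfp A split_prog (inl (inl (x, key (map (tp A) w)))) w)).
move=> ru Hru v Hv Hb.
pose c : {ffun 'I_(rn ru) -> sty P} := [ffun i => tp A (v i)].
have Hc : @ok_choice ru c.
  apply/andP; split; first by apply/forallP => i; rewrite ffunE; apply/eqP; exact: Hv.
  apply: In_all_intro => a Ha; have := Hb a Ha.
  by case: a Ha => [D xs|x y] _ //= H; rewrite !ffunE H.
have Hin : List.In (@split_rule ru c) split_rules.
  apply/In_cat; left; apply/In_flatten.
  exists (map (@split_rule ru) (filter (@ok_choice ru) (enum {ffun 'I_(rn ru) -> sty P}))).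
  split; first by apply/In_map; exists ru.
  by apply/In_map; exists c; split => //; apply: In_filter_intro Hc (In_enum _).
have Hmc l : map (tp A) (map v l) = map c l by elim: l => //= a l ->; rewrite ffunE.
have := @lfp_closed P A split_prog _ Hin v; rewrite /= Hmc; apply.
- by move=> i; rewrite ffunE.
- move=> a' /In_map [a [Ha <-]]; have := Hb a Ha.
  case: a Ha => [[R|x] xs|x y] _ //=.
  + by move/in_lfp'; rewrite Hmc.
  + by rewrite Hmc.
Qed.

Lemma split_out w : prog_out A split_prog w <-> prog_out B p w /\ map (tp A) w = cs.
Proof.
split; first exact: split_sub (inr tt) w.
move=> [H1 H2]; apply: (@fire_out P A split_prog cs (inr tt) (ssym_of (out p) (key cs))) => //.
- by rewrite /= /split_rules !In_cat; right; right; left.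
- move: H1; rewrite /prog_out; case: (out p) => [R|x] /= H.
  + by move/in_lfp': H; rewrite H2.
  + by move/sup_lfp: H; rewrite H2.
Qed.
End Split.

Section Part3.
Variables (P S T : signature) (u : gadget P S) (phi : dinterp S T).

Definition ardom (t : sty T) := prog_ar (dom_prog phi t).
Definition S'ty : finType := {t : sty T & (size (ardom t)).-tuple (sty P)}.
Definition S'pre : finType := {R : ssym T & (size (sar R)).-tuple S'ty}.
Definition S'sym : finType := {x : S'pre | map tag (tagged x) == sar (tag x)}.
Definition S'sar (x : S'sym) : seq S'ty := tagged (val x).
Definition S' : signature := @Signature S'ty S'sym S'sar.
Lemma u'_ar (R : ssym S') : sar (tag (val R)) = map tag (sar R).
Proof. exact: esym (eqP (valP R)). Qed.
Definition u' : gadget S' T := @Gadget S' T (fun e => tag e) (fun R => tag (val R)) u'_ar.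
Definition ardec (e : S'ty) : seq (sty P) := tagged e.
Definition dom' (e : sty S') : program P := split_prog u (dom_prog phi (tag e)) (ardec e).
Definition rel' (x : ssym S') : program P :=
  split_prog u (rel_prog phi (tag (val x))) (flatten (map ardec (sar x))).
Lemma dar' x : prog_ar (rel' x) = flatten (map (fun e => prog_ar (dom' e)) (sar x)).
Proof. by []. Qed.
Definition phi' : dinterp P S' := @DInterp P S' dom' rel' dar'.

Variable A : structure P.
Local Notation B := (apply_gadget u A).

Lemma f_pf (e : delem phi' A) : prog_out B (dom_prog phi (tag (sval e).1)) (sval e).2.
Proof. by move: (proj2_sig e) => /split_out []. Qed.
Definition f3 (e : delem phi' A) : delem phi B :=
  exist _ (tag (sval e).1, (sval e).2) (@f_pf e).

Lemma f_ty (e : delem phi' A) : map (tp A) (sval e).2 = ardec (sval e).1.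
Proof. by move: (proj2_sig e) => /split_out []. Qed.

Lemma g_sz (e : delem phi B) : size (map (tp A) (sval e).2) == size (ardom (sval e).1).
Proof.
apply/eqP; have := prog_out_typed (proj2_sig e); rewrite /ardom => <-.
by rewrite !size_map.
Qed.
Definition gty (e : delem phi B) : S'ty := existT _ (sval e).1 (Tuple (g_sz e)).
Lemma g_pf (e : delem phi B) : prog_out A (dom_prog phi' (gty e)) (sval e).2.
Proof.
apply: (proj2 (@split_out P S u (dom_prog phi (sval e).1) (ardec (gty e)) A (sval e).2)).
by split => //; exact: (proj2_sig e).
Qed.
Definition g3 (e : delem phi B) : delem phi' A := exist _ (gty e, (sval e).2) (@g_pf e).

Lemma iso3 : iso (apply_gadget u' (apply_dinterp phi' A)) (apply_dinterp phi B).
Proof.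
exists f3, g3; split; [|split; [|split]].
- move=> e; apply: sig_eq => /=.
  have := @f_ty e; case: e => [[[t k] w] pf] /= Hk; congr (_, _).
  congr (existT _ t _); apply: val_inj => /=; exact: Hk.
- by case=> [[t w] pf]; apply: sig_eq.
- by [].
- move=> R es; split.
  + case=> x [<- [Hty Hpo]]; split.
    * have -> : map (@delem_tp _ _ phi B) (map f3 es) = map tag (map (@delem_tp _ _ phi' A) es).
        by rewrite -!map_comp.
      by rewrite Hty u'_ar.
    * have [H _] := proj1 (@split_out P S u (rel_prog phi (tag (val x))) _ A _) Hpo.
      move: H; rewrite -map_comp; exact.
  + case=> Hty Hpo.
    have Hty' : map tag (map (@delem_tp _ _ phi' A) es) = sar R by rewrite -Hty -!map_comp.
    have Hsz : size (map (@delem_tp _ _ phi' A) es) == size (sar R).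
      by rewrite -Hty' !size_map.
    pose tup : (size (sar R)).-tuple S'ty := Tuple Hsz.
    have Hm : map tag (tagged (existT (fun R => (size (sar R)).-tuple S'ty) R tup)) ==
              sar (tag (existT (fun R => (size (sar R)).-tuple S'ty) R tup)).
      by apply/eqP.
    exists (@exist S'pre (fun x => map tag (tagged x) == sar (tag x)) _ Hm : S'sym).
    split => //; split => //.
    apply: (proj2 (@split_out P S u (rel_prog phi R) _ A _)); split.
    * by move: Hpo; rewrite -map_comp.
    * rewrite map_flatten -!map_comp /=; congr flatten; apply: eq_map => e /=.
      exact: @f_ty e.
Qed.
End Part3.

Definition map_atom (D D' : Type) n (f : D -> D') (a : atom D n) : atom D' n :=
  match a with ARel d xs => ARel (f d) xs | AEq x y => AEq _ x y end.

Lemma zip_pt (X Y : Type) (f : X -> Y) (s t : seq X) a b :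
  map f s = map f t -> List.In (a, b) (zip s t) -> f a = f b.
Proof.
elim: s t => [|x s IH] [|y t] //= [E1 E2] [[<- <-]|H] //; exact: IH E2 H.
Qed.

Lemma zip_eq (X Y : Type) (f : X -> Y) (s t : seq X) :
  size s = size t -> (forall a b, List.In (a, b) (zip s t) -> f a = f b) -> map f s = map f t.
Proof.
elim: s t => [|x s IH] [|y t] //= [Hs] H; rewrite (H x y (or_introl erefl)) (IH t) //.
by move=> a b Hab; apply: H; right.
Qed.

Lemma map_tnth_cast (X : Type) m (w : seq X) (H : m = size w) :
  map (fun j => tnth (in_tuple w) (cast_ord H j)) (enum 'I_m) = w.
Proof.
move: (H) => H'; subst m; rewrite (eq_irrelevance H' (erefl (size w))).
rewrite -[RHS](map_tnth_enum (in_tuple w)); apply: eq_map => j.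
by rewrite cast_ord_id.
Qed.

Lemma cat_inj (X : Type) (s1 s2 s3 s4 : seq X) :
  size s1 = size s3 -> s1 ++ s2 = s3 ++ s4 -> s1 = s3 /\ s2 = s4.
Proof.
elim: s1 s3 => [|a s1 IH] [|b s3] //= [Hs] [-> H].
by have [-> ->] := IH s3 Hs H.
Qed.

Section Trans.
Variables (P S : signature) (phi : dinterp P S) (q : program S).
Local Notation ardom t := (prog_ar (dom_prog phi t)).

Definition TA : finType :=
  ((aux q + unit) + ({R : ssym S & aux (rel_prog phi R)} + {t : sty S & aux (dom_prog phi t)}))%type.

Definition ta_ar (a : TA) : seq (sty P) :=
  match a with
  | inl (inl x) => flatten (map (fun t => ardom t) (aux_ar x))
  | inl (inr _) => flatten (map (fun t => ardom t) (prog_ar q))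
  | inr (inl (existT R y)) => aux_ar y
  | inr (inr (existT t y)) => aux_ar y
  end.

Definition embR R (D : ssym P + aux (rel_prog phi R)) : ssym P + TA :=
  match D with inl R0 => inl R0 | inr y => inr (inr (inl (existT _ R y))) end.
Definition embD t (D : ssym P + aux (dom_prog phi t)) : ssym P + TA :=
  match D with inl R0 => inl R0 | inr y => inr (inr (inr (existT _ t y))) end.

Definition copyR R (r : rule (ssym P + aux (rel_prog phi R)) (aux (rel_prog phi R)) (sty P)) :
    rule (ssym P + TA) TA (sty P) :=
  @Rule _ _ _ (rn r) (rvty r) (inr (inl (existT _ R (rhead r).1)), (rhead r).2)
    (map (map_atom (@embR R)) (rbody r)).
Definition copyD t (r : rule (ssym P + aux (dom_prog phi t)) (aux (dom_prog phi t)) (sty P)) :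
    rule (ssym P + TA) TA (sty P) :=
  @Rule _ _ _ (rn r) (rvty r) (inr (inr (existT _ t (rhead r).1)), (rhead r).2)
    (map (map_atom (@embD t)) (rbody r)).

Section TrRule.
Variables (X : Type) (hs : X -> TA) (ru : rule (ssym S + aux q) X (sty S)).
Definition V : finType := {i : 'I_(rn ru) & 'I_(size (ardom (rvty ru i)))}.
Definition ty' (k : 'I_#|V|) : sty P :=
  tnth (in_tuple (ardom (rvty ru (tag (enum_val k))))) (tagged (enum_val k)).
Definition block (i : 'I_(rn ru)) : seq 'I_#|V| :=
  map (fun j => enum_rank (existT (fun i => 'I_(size (ardom (rvty ru i)))) i j))
      (enum 'I_(size (ardom (rvty ru i)))).
Definition blocks (xs : seq 'I_(rn ru)) : seq 'I_#|V| := flatten (map block xs).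
Definition trD (D : ssym S + aux q) : ssym P + TA :=
  match D with
  | inl R => embR (out (rel_prog phi R))
  | inr x => inr (inl (inl x))
  end.
Definition tr_atom (a : atom (ssym S + aux q) (rn ru)) : seq (atom (ssym P + TA) #|V|) :=
  match a with
  | ARel D xs => [:: ARel (trD D) (blocks xs)]
  | AEq x y => map (fun ab => AEq _ ab.1 ab.2) (zip (block x) (block y))
  end.
Definition dom_atoms : seq (atom (ssym P + TA) #|V|) :=
  map (fun i => ARel (embD (out (dom_prog phi (rvty ru i)))) (block i)) (enum 'I_(rn ru)).
Definition tr_rule : rule (ssym P + TA) TA (sty P) :=
  @Rule _ _ _ #|V| ty' (hs (rhead ru).1, blocks (rhead ru).2)
    (flatten (map tr_atom (rbody ru)) ++ dom_atoms).

Lemma block_ty i : map ty' (block i) = ardom (rvty ru i).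
Proof.
rewrite -map_comp -[RHS](map_tnth_enum (in_tuple (ardom (rvty ru i)))).
by apply: eq_map => j /=; rewrite /ty' enum_rankK.
Qed.
Lemma blocks_ty xs : map ty' (blocks xs) = flatten (map (fun t => ardom t) (map (rvty ru) xs)).
Proof. by rewrite /blocks map_flatten -!map_comp; congr flatten; apply: eq_map => i /=; rewrite block_ty. Qed.
End TrRule.

Definition darT (D : ssym P + TA) : seq (sty P) :=
  match D with inl R => sar R | inr x => ta_ar x end.
Lemma darT_embR R (D : ssym P + aux (rel_prog phi R)) : darT (embR D) = dar D.
Proof. by case: D. Qed.
Lemma darT_embD t (D : ssym P + aux (dom_prog phi t)) : darT (embD D) = dar D.
Proof. by case: D. Qed.

Definition wt_concl (ru : rule (ssym P + TA) TA (sty P)) : Prop :=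
      map (rvty ru) (rhead ru).2 = ta_ar (rhead ru).1 /\
      (forall a, List.In a (rbody ru) ->
         match a with
         | ARel D xs => map (rvty ru) xs =
                          match D with inl R => sar R | inr x => ta_ar x end
         | AEq x y => rvty ru x = rvty ru y
         end).

Lemma tr_wt X (hs : X -> TA) (ru : rule (ssym S + aux q) X (sty S)) (harity : X -> seq (sty S)) :
  map (rvty ru) (rhead ru).2 = harity (rhead ru).1 ->
  (forall a, List.In a (rbody ru) ->
         match a with
         | ARel D xs => map (rvty ru) xs = dar D
         | AEq x y => rvty ru x = rvty ru y
         end) ->
  ta_ar (hs (rhead ru).1) = flatten (map (fun t => ardom t) (harity (rhead ru).1)) ->
  wt_concl (tr_rule hs ru).
Proof.
move=> Hh Hb Hhs; split; first by rewrite /= blocks_ty Hh Hhs.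
move=> a' /In_cat [/In_flatten [s [/In_map [a [Ha <-]] Ha']]|/In_map [i [_ <-]]].
- have := Hb a Ha; case: a Ha Ha' => [D xs|x y] _ /=.
  + case=> [<-|//] H; rewrite blocks_ty H -/(darT _).
    case: D H => [R|x] H /=; last by [].
    by rewrite darT_embR -/(prog_ar _) dinterp_ar.
  + move=> /In_map [[a b] [Hab <-]] H /=.
    apply: (zip_pt (f := ty' (ru := ru)) _ Hab); by rewrite !block_ty H.
- by rewrite block_ty -/(darT _) darT_embD.
Qed.

Definition ro : rule (ssym S + aux q) unit (sty S) := out_rule (prog_ar q) tt (out q).

Definition tq_rules : seq (rule (ssym P + TA) TA (sty P)) :=
  map (@tr_rule _ (fun x => inl (inl x))) (rules q) ++
  [:: @tr_rule _ (fun _ => inl (inr tt)) ro] ++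
  flatten (map (fun R => map (@copyR R) (rules (rel_prog phi R))) (enum (ssym S))) ++
  flatten (map (fun t => map (@copyD t) (rules (dom_prog phi t))) (enum (sty S))).

Lemma In_tq_rules ru' : List.In ru' tq_rules ->
  (exists ru, List.In ru (rules q) /\ ru' = @tr_rule _ (fun x => inl (inl x)) ru) \/
  ru' = @tr_rule _ (fun _ => inl (inr tt)) ro \/
  (exists R r, List.In r (rules (rel_prog phi R)) /\ ru' = @copyR R r) \/
  (exists t r, List.In r (rules (dom_prog phi t)) /\ ru' = @copyD t r).
Proof.
rewrite /tq_rules !In_cat !In_flatten.
case=> [/In_map [ru [H <-]]|[[<-|//]|[[s [/In_map [R [_ <-]] /In_map [r [H <-]]]]|[s [/In_map [t [_ <-]] /In_map [r [H <-]]]]]]].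
- by left; exists ru.
- by right; left.
- by right; right; left; exists R, r.
- by right; right; right; exists t, r.
Qed.

Lemma tq_wt ru' : List.In ru' tq_rules -> wt_concl ru'.
Proof.
case/In_tq_rules => [[ru [H ->]]|[->|[[R [r [H ->]]]|[t [r [H ->]]]]]].
- have [Hh Hb] := rules_wt H.
  apply: (@tr_wt _ _ ru (@aux_ar _ q)) => //.
- apply: (@tr_wt _ _ ro (fun _ => prog_ar q)) => //=; first exact: out_rule_ty.
  by move=> a [<-|//] /=; rewrite out_rule_ty.
- have [Hh Hb] := rules_wt H; split; first exact: Hh.
  move=> a' /In_map [a [Ha <-]]; have := Hb a Ha.
  by case: a Ha => [D xs|x y] _ //= ->; rewrite -/(darT _) darT_embR.
- have [Hh Hb] := rules_wt H; split; first exact: Hh.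
  move=> a' /In_map [a [Ha <-]]; have := Hb a Ha.
  by case: a Ha => [D xs|x y] _ //= ->; rewrite -/(darT _) darT_embD.
Qed.

Definition tq : program P := @Program P TA ta_ar tq_rules (inr (inl (inr tt))) tq_wt.

Variable A : structure P.
Local Notation B := (apply_dinterp phi A).

Definition flat (ws : seq B) : seq A := flatten (map (fun e => (sval e).2) ws).

Lemma size_delem (e : B) : size (sval e).2 = size (ardom (sval e).1).
Proof. by rewrite -(prog_out_typed (proj2_sig e)) size_map. Qed.

Lemma delem_inj (ws1 ws2 : seq B) :
  map (tp B) ws1 = map (tp B) ws2 -> flat ws1 = flat ws2 -> ws1 = ws2.
Proof.
elim: ws1 ws2 => [|e1 ws1 IH] [|e2 ws2] //= [H1 H2] H.
have Hs : size (sval e1).2 = size (sval e2).2.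
  by rewrite !size_delem; congr (size (prog_ar (dom_prog phi _))).
have [E1 E2] := cat_inj Hs H.
rewrite (IH ws2 H2 E2); congr cons; apply: sig_eq.
by move: H1 E1; rewrite /tp /= /delem_tp; case: (sval e1) => ? ?; case: (sval e2) => ? ? /= -> ->.
Qed.

Lemma copyR_sup R y w : lfp A (rel_prog phi R) y w -> lfp A tq (inr (inl (existT _ R y))) w.
Proof.
move: y w; apply: (@lfp_least P A (rel_prog phi R)
  (fun y w => lfp A tq (inr (inl (existT _ R y))) w)).
move=> r Hr v Hv Hb.
have Hin : List.In (copyR r) (rules tq).
  rewrite /= /tq_rules !In_cat; right; right; left; apply/In_flatten.
  exists (map (@copyR R) (rules (rel_prog phi R))); split; last by apply/In_map; exists r.
  by apply/In_map; exists R; split => //; exact: In_enum.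
apply: (@lfp_closed P A tq _ Hin v Hv) => a' /In_map [a [Ha <-]].
by have := Hb a Ha; case: a Ha => [[R0|x] xs|x y] _.
Qed.

Lemma copyD_sup t y w : lfp A (dom_prog phi t) y w -> lfp A tq (inr (inr (existT _ t y))) w.
Proof.
move: y w; apply: (@lfp_least P A (dom_prog phi t)
  (fun y w => lfp A tq (inr (inr (existT _ t y))) w)).
move=> r Hr v Hv Hb.
have Hin : List.In (copyD r) (rules tq).
  rewrite /= /tq_rules !In_cat; right; right; right; apply/In_flatten.
  exists (map (@copyD t) (rules (dom_prog phi t))); split; last by apply/In_map; exists r.
  by apply/In_map; exists t; split => //; exact: In_enum.
apply: (@lfp_closed P A tq _ Hin v Hv) => a' /In_map [a [Ha <-]].
by have := Hb a Ha; case: a Ha => [[R0|x] xs|x y] _.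
Qed.

Lemma prog_out_R R w : prog_out A (rel_prog phi R) w ->
  dholds A tq (lfp A tq) (embR (out (rel_prog phi R))) w.
Proof. rewrite /prog_out; case: (out _) => [R0|y] //=; exact: copyR_sup. Qed.
Lemma prog_out_D t w : prog_out A (dom_prog phi t) w ->
  dholds A tq (lfp A tq) (embD (out (dom_prog phi t))) w.
Proof. rewrite /prog_out; case: (out _) => [R0|y] //=; exact: copyD_sup. Qed.

Definition tcand (a : TA) (w : seq A) : Prop :=
  match a with
  | inl (inl x) => exists ws, flat ws = w /\ lfp B q x ws
  | inl (inr _) => exists ws, flat ws = w /\ prog_out B q ws
  | inr (inl (existT R y)) => lfp A (rel_prog phi R) y w
  | inr (inr (existT t y)) => lfp A (dom_prog phi t) y w
  end.

Lemma tcand_embR R (D : ssym P + aux (rel_prog phi R)) w :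
  dholds A tq tcand (embR D) w <-> dholds A (rel_prog phi R) (lfp A (rel_prog phi R)) D w.
Proof. by case: D. Qed.
Lemma tcand_embD t (D : ssym P + aux (dom_prog phi t)) w :
  dholds A tq tcand (embD D) w <-> dholds A (dom_prog phi t) (lfp A (dom_prog phi t)) D w.
Proof. by case: D. Qed.

Lemma In_dom_atom X (hs : X -> TA) ru i :
  List.In (ARel (embD (out (dom_prog phi (rvty ru i)))) (@block _ ru i)) (rbody (tr_rule hs ru)).
Proof. apply/In_cat; right; apply/In_map; exists i; split => //; exact: In_enum. Qed.

Lemma In_tr_atom X (hs : X -> TA) ru a a' :
  List.In a (rbody ru) -> List.In a' (tr_atom a) -> List.In a' (rbody (tr_rule hs ru)).
Proof. move=> Ha Ha'; apply/In_cat; left; apply/In_flatten; exists (tr_atom a); split => //.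
by apply/In_map; exists a. Qed.

Lemma flat_blocks X (ru : rule (ssym S + aux q) X (sty S)) (vB : 'I_(rn ru) -> B) vA xs :
  (forall i, (sval (vB i)).2 = map vA (block i)) -> flat (map vB xs) = map vA (blocks xs).
Proof.
move=> H; rewrite /flat /blocks map_flatten -!map_comp; congr flatten; apply: eq_map => i /=.
exact: H.
Qed.

Lemma tr_sound X (hs : X -> TA) (ru : rule (ssym S + aux q) X (sty S)) :
  (forall a, List.In a (rbody ru) ->
         match a with
         | ARel D xs => map (rvty ru) xs = dar D
         | AEq x y => rvty ru x = rvty ru y
         end) ->
  forall vA : 'I_#|V ru| -> A,
  (forall a, List.In a (rbody (tr_rule hs ru)) -> atom_holds A tq tcand vA a) ->
  exists vB : 'I_(rn ru) -> B, (forall i, delem_tp (vB i) = rvty ru i) /\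
     (forall i, (sval (vB i)).2 = map vA (block i)) /\
     (forall a, List.In a (rbody ru) -> atom_holds B q (lfp B q) vB a).
Proof.
move=> Hwt vA Hb.
have Hdom i : prog_out A (dom_prog phi (rvty ru i)) (map vA (block i)).
  have := Hb _ (In_dom_atom hs i); rewrite /prog_out.
  by case: (out (dom_prog phi (rvty ru i))) => [R0|y].
pose vB i : B := exist _ (rvty ru i, map vA (block i)) (Hdom i).
exists vB; split => //; split => // a Ha.
have Hta a' : List.In a' (tr_atom a) -> atom_holds A tq tcand vA a' by apply: (Hb _ \o In_tr_atom hs Ha).
have Hfl xs : flat (map vB xs) = map vA (blocks xs) by apply: flat_blocks.
have := Hwt a Ha; case: a Ha Hta => [[R|x] xs|x y] _ Hta /= H.
- have := Hta _ (or_introl erefl) => /= /tcand_embR H2; split.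
  + by rewrite -map_comp.
  + by rewrite -/(flat _) Hfl.
- have [ws [Hws Hl]] := Hta _ (or_introl erefl).
  suff <- : ws = map vB xs by [].
  apply: delem_inj; last by rewrite Hws Hfl.
  by rewrite (lfp_typed Hl) -map_comp.
- apply: sig_eq => /=; congr pair; first exact: H.
  apply: zip_eq; first by rewrite -(size_map (@ty' _ ru) (block x)) block_ty -(size_map (@ty' _ ru) (block y)) block_ty H.
  move=> a b Hab; exact: (Hta (AEq _ a b) (proj2 (In_map _ _ _) (ex_intro _ (a, b) (conj Hab erefl)))).
Qed.

Definition Jq (x : aux q) (ws : seq B) : Prop := lfp A tq (inl (inl x)) (flat ws).

Lemma tr_complete X (hs : X -> TA) (ru : rule (ssym S + aux q) X (sty S)) :
  List.In (tr_rule hs ru) (rules tq) ->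
  forall vB : 'I_(rn ru) -> B, (forall i, delem_tp (vB i) = rvty ru i) ->
  (forall a, List.In a (rbody ru) -> atom_holds B q Jq vB a) ->
  lfp A tq (hs (rhead ru).1) (flat (map vB (rhead ru).2)).
Proof.
move=> Hin vB Hv Hb.
have Hs i : size (ardom (rvty ru i)) = size (sval (vB i)).2 by rewrite size_delem -Hv.
pose vA (k : 'I_#|V ru|) : A :=
  tnth (in_tuple (sval (vB (tag (enum_val k)))).2)
       (cast_ord (Hs (tag (enum_val k))) (tagged (enum_val k))).
have Hblk i : map vA (block i) = (sval (vB i)).2.
  rewrite -map_comp -[RHS](map_tnth_cast (Hs i)); apply: eq_map => j /=.
  by rewrite /vA enum_rankK.
have Hfl xs : flat (map vB xs) = map vA (blocks xs) by apply: flat_blocks => i; rewrite Hblk.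
have Hm i : map (tp A \o vA) (block i) = map (@ty' _ ru) (block i).
  rewrite map_comp Hblk block_ty (prog_out_typed (proj2_sig (vB i))).
  by rewrite -/(delem_tp _) Hv.
have Hty k : tp A (vA k) = ty' k.
  have Hk : k \in block (tag (enum_val k)).
    rewrite -{1}[k]enum_valK; case: (enum_val k) => i0 j /=; apply: map_f; exact: mem_enum.
  by move/eq_in_map: (Hm (tag (enum_val k))) => /(_ k Hk).
rewrite Hfl; apply: (@lfp_closed P A tq _ Hin vA Hty).
move=> a' /In_cat [/In_flatten [s [/In_map [a [Ha <-]] Ha']]|/In_map [i [_ <-]]].
- have := Hb a Ha; case: a Ha Ha' => [[R|x] xs|x y] _ /=.
  + by move=> [<-|//] [_ H] /=; apply: prog_out_R; rewrite -Hfl.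
  + by move=> [<-|//] H /=; rewrite -Hfl.
  + move=> /In_map [[a b] [Hab <-]] H /=.
    apply: (zip_pt (f := vA) _ Hab); by rewrite !Hblk H.
- rewrite /= Hblk; apply: prog_out_D; rewrite -Hv; exact: (proj2_sig (vB i)).
Qed.

Lemma ro_wt : forall a, List.In a (rbody ro) ->
         match a with
         | ARel D xs => map (rvty ro) xs = dar D
         | AEq x y => rvty ro x = rvty ro y
         end.
Proof. by move=> a [<-|//] /=; rewrite out_rule_ty. Qed.

Lemma tcand_closed : rules_closed A tq tcand.
Proof.
move=> ru' /In_tq_rules [[ru [Hru ->]]|[->|[[R [r [Hr ->]]]|[t [r [Hr ->]]]]]] v Hv Hb.
- have [Hh Hwt] := rules_wt Hru.
  have [vB [HvB [Hblk Hbody]]] := tr_sound Hwt Hb.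
  exists (map vB (rhead ru).2); split; first by apply: flat_blocks.
  by apply: (@lfp_closed S B q ru Hru vB).
- have [vB [HvB [Hblk Hbody]]] := @tr_sound _ _ ro ro_wt v Hb.
  exists (map vB (enum 'I_(size (prog_ar q)))); split; first by apply: flat_blocks.
  exact: (Hbody _ (or_introl erefl)).
- apply: (@lfp_closed P A (rel_prog phi R) r Hr v Hv) => a Ha.
  by have := Hb _ (proj2 (In_map _ _ _) (ex_intro _ a (conj Ha erefl))); case: a Ha => [[R0|x] xs|x y] _.
- apply: (@lfp_closed P A (dom_prog phi t) r Hr v Hv) => a Ha.
  by have := Hb _ (proj2 (In_map _ _ _) (ex_intro _ a (conj Ha erefl))); case: a Ha => [[R0|x] xs|x y] _.
Qed.

Lemma sup_q x ws : lfp B q x ws -> Jq x ws.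
Proof.
move: x ws; apply: (@lfp_least S B q Jq) => ru Hru vB Hv Hb.
apply: (@tr_complete _ (fun x => inl (inl x)) ru) => //.
by rewrite /= /tq_rules In_cat; left; apply/In_map; exists ru.
Qed.

Lemma tq_out w : prog_out A tq w <-> exists ws, flat ws = w /\ prog_out B q ws.
Proof.
split; first exact: (@lfp_least P A tq tcand tcand_closed (inl (inr tt)) w).
move=> [ws [<- Hpo]].
have Hs : size ws = size (prog_ar q) by rewrite -(prog_out_typed Hpo) size_map.
have [vB HvB] := seq_val Hs.
have Hv : forall i, delem_tp (vB i) = tnth (in_tuple (prog_ar q)) i.
  apply: enum_pt; rewrite map_comp HvB out_rule_ty.
  exact: (prog_out_typed Hpo).
have := @tr_complete _ (fun _ => inl (inr tt)) ro _ vB Hv.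
rewrite /= HvB; apply.
- by rewrite /= /tq_rules In_cat; right; left.
- move=> a [<-|//] /=; rewrite HvB; move: Hpo; rewrite /prog_out.
  case: (out q) => [R|x] //=; exact: sup_q.
Qed.
End Trans.

Lemma flatten_flat (X Y : Type) (f : X -> seq Y) (ss : seq (seq X)) :
  flatten (map f (flatten ss)) = flatten (map (fun s => flatten (map f s)) ss).
Proof. by elim: ss => //= s ss IH; rewrite map_cat flatten_cat IH. Qed.

Section Part2.
Variables (P S T : signature) (phi : dinterp P S) (phi' : dinterp S T).

Lemma psi_ar R : prog_ar (tq phi (rel_prog phi' R)) =
  flatten (map (fun t => prog_ar (tq phi (dom_prog phi' t))) (sar R)).
Proof. by rewrite /prog_ar /= -/(prog_ar _) dinterp_ar flatten_flat -map_comp. Qed.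

Definition psi : dinterp P T :=
  @DInterp P T (fun t => tq phi (dom_prog phi' t)) (fun R => tq phi (rel_prog phi' R)) psi_ar.

Variable A : structure P.
Local Notation B := (apply_dinterp phi A).

Lemma flat_flatten (ss : seq (seq B)) : flat (flatten ss) = flatten (map (@flat _ _ phi A) ss).
Proof. by elim: ss => //= s ss <-; rewrite /flat map_cat flatten_cat. Qed.

Definition dec (e : delem psi A) :=
  constructive_indefinite_description _ (proj1 (tq_out phi _ _) (proj2_sig e)).

Definition f2 (e : delem psi A) : delem phi' B :=
  exist _ ((sval e).1, proj1_sig (dec e)) (proj2 (proj2_sig (dec e))).

Lemma g2_pf (c : delem phi' B) : prog_out A (dom_prog psi (sval c).1) (flat (sval c).2).
Proof. by apply/(tq_out phi); exists (sval c).2; split => //; exact: (proj2_sig c). Qed.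

Definition g2 (c : delem phi' B) : delem psi A :=
  exist _ ((sval c).1, flat (sval c).2) (@g2_pf c).

Lemma f2_flat e : flat (sval (f2 e)).2 = (sval e).2.
Proof. exact: proj1 (proj2_sig (dec e)). Qed.

Lemma iso2 : iso (apply_dinterp psi A) (apply_dinterp phi' B).
Proof.
exists f2, g2; split; [|split; [|split]].
- move=> e; apply: sig_eq => /=; rewrite f2_flat; by case: (sval e).
- move=> c; apply: sig_eq => /=.
  have [Hfl Hpo] := proj2_sig (dec (g2 c)).
  rewrite [in RHS](surjective_pairing (sval c)); congr pair.
  apply: delem_inj => //.
  by rewrite (prog_out_typed Hpo) (prog_out_typed (proj2_sig c)).
- by [].
- move=> R es; rewrite /= /delem_rel.
  have Hfl : flat (flatten (map (fun e => (sval e).2) (map f2 es))) = flatten (map (fun e => (sval e).2) es).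
    rewrite flat_flatten -!map_comp; congr flatten; apply: eq_map => e /=; exact: f2_flat.
  have -> : map (@delem_tp _ _ phi' B) (map f2 es) = map (@delem_tp _ _ psi A) es by rewrite -map_comp.
  split; move=> [Hty Hpo]; split => //.
  + have [ws0 [Hws0 Hpo0]] := proj1 (tq_out phi _ _) Hpo.
    suff <- : ws0 = flatten (map (fun e => (sval e).2) (map f2 es)) by [].
    apply: delem_inj; last by rewrite Hws0 Hfl.
    rewrite (prog_out_typed Hpo0) dinterp_ar map_flatten -Hty -!map_comp; congr flatten.
    apply: eq_map => e /=; rewrite (prog_out_typed (proj2_sig (f2 e))); done.
  + by apply/(tq_out phi); exists (flatten (map (fun e => (sval e).2) (map f2 es))).
Qed.
End Part2.
Theorem mainTheorem2 :
  (* (1) composition of union gadgets *)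
  (forall (P S T : signature) (u : gadget P S) (u' : gadget S T),
     exists mu : gadget P T,
       forall A : structure P,
         iso (apply_gadget mu A) (apply_gadget u' (apply_gadget u A))) /\
  (* (2) composition of Datalog interpretations *)
  (forall (P S T : signature) (phi : dinterp P S) (phi' : dinterp S T),
     exists psi : dinterp P T,
       forall A : structure P,
         iso (apply_dinterp psi A) (apply_dinterp phi' (apply_dinterp phi A))) /\
  (* (3) commuting a union gadget past a Datalog interpretation *)
  (forall (P S T : signature) (u : gadget P S) (phi : dinterp S T),
     exists (S' : signature) (u' : gadget S' T) (phi' : dinterp P S'),
       forall A : structure P,
         iso (apply_gadget u' (apply_dinterp phi' A))
             (apply_dinterp phi (apply_gadget u A))).
Proof.
split; first exact: part1.
split.
- move=> P S T phi phi'; exists (psi phi phi') => A; exact: iso2.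
- move=> P S T u phi; do 3 eexists; move=> A; exact: (iso3 u phi A).
Qed.
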